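(* Let $R$ be a commutative ring with identity that is not an integral domain. Then $\gamma_t(\Gamma(R)) = 1$ if and only if $Z(R)$ is an annihilator ideal, i.e., $Z(R) = \operatorname{ann}(a)$ for some $a \in R$.
   Context: All rings are commutative with identity. $Z(R)$ is the set of zero-divisors, $Z(R)^*=Z(R)\setminus\{0\}$, and $\operatorname{ann}(a)=\{x\in R: ax=0\}$. The zero-divisor graph $\Gamma(R)$ has vertex set $Z(R)^*$; distinct $r,s$ are adjacent iff $rs=0$, and $x$ is adjacent to itself iff $x^2=0$. A total dominating set is a set $X\subseteq Z(R)^*$ such that every vertex $v$ is adjacent to some $x\in X$ (self-adjacency counts); $\gamma_t(\Gamma(R))$ is the minimum cardinality of a total dominating set. *)

(* Defs.v *)
From mathcomp Require Import all_boot all_algebra.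
Set Implicit Arguments. Unset Strict Implicit. Unset Printing Implicit Defensive.
Import GRing.Theory.
Local Open Scope ring_scope.

(* R : comNzRingType = commutative ring with identity, 1 <> 0. *)

Definition zero_divisor (R : comNzRingType) (x : R) : Prop :=
  exists y : R, y != 0 /\ x * y = 0.

Definition zd_vertex (R : comNzRingType) (x : R) : Prop :=
  x != 0 /\ zero_divisor x.

Definition ann (R : comNzRingType) (a : R) : R -> Prop := fun x => a * x = 0.

Definition zdg_adj (R : comNzRingType) (r s : R) : Prop :=
  (r != s /\ r * s = 0) \/ (r = s /\ r * r = 0).

(* R is an integral domain (R nontrivial is built into comNzRingType). *)
Definition is_integral_domain (R : comNzRingType) : Prop :=
  forall a b : R, a * b = 0 -> a = 0 \/ b = 0.

Definition total_dominating (R : comNzRingType) (X : R -> Prop) : Prop :=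
  (forall x, X x -> zd_vertex x) /\
  (forall v, zd_vertex v -> exists x, X x /\ zdg_adj v x).

(* gamma_t(Gamma(R)) = n (for a natural number n): there is a total
   dominating set with exactly n elements, and every total dominating set
   has at least n elements (finite ones: at least n listed distinct
   elements; infinite ones trivially have cardinality >= n). *)
Definition total_domination_number_is (R : comNzRingType) (n : nat) : Prop :=
  (exists s : seq R, uniq s /\ size s = n /\
      total_dominating (fun x => x \in s)) /\
  (forall X : R -> Prop, total_dominating X ->
     forall m : nat, (m < n)%N ->
       ~ (exists s : seq R, uniq s /\ size s = m /\ forall x, X x <-> x \in s)).

(* Main.v *)
Require Import Defs.
From mathcomp Require Import all_boot all_algebra.
From Stdlib Require Import Classical.
Local Open Scope ring_scope.
Import GRing.Theory.

Theorem theorem3p2 (R : comNzRingType) :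
  ~ is_integral_domain R ->
  (total_domination_number_is R 1 <->
   exists a : R, forall x : R, zero_divisor x <-> ann a x).
Proof.
move=> nD.
have [c [d [cd [c0 d0]]]] : exists c d : R, c * d = 0 /\ c != 0 /\ d != 0.
  apply: NNPP => H; apply: nD => a b ab.
  case: (eqVneq a 0) => [->|a0]; first by left.
  case: (eqVneq b 0) => [->|b0]; first by right.
  by exfalso; apply: H; exists a, b.
split.
- move=> [[s [us [ss [Xv Xd]]]] _].
  case: s us ss Xv Xd => [|x [|? ?]] //= _ _ Xv Xd.
  have [x0 _] := Xv x (mem_head _ _).
  exists x => y; split.
  + move=> zy; case: (eqVneq y 0) => [->|y0]; first by rewrite /ann mulr0.
    have [z []] := Xd y (conj y0 zy).
    rewrite inE => /eqP -> [[_ h]|[-> h]]; by rewrite /ann mulrC.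
  + by move=> h; exists x; split => //; rewrite mulrC.
- move=> [a Ha].
  have za : zero_divisor a.
    have : ann a c by apply/Ha; exists d.
    by move=> h; exists c.
  have a0 : a != 0.
    apply/negP => /eqP a0.
    have : zero_divisor (1 : R) by apply/Ha; rewrite /ann a0 mul0r.
    by case=> y [y0]; rewrite mul1r => /eqP; rewrite (negPf y0).
  have aa : a * a = 0 by apply/Ha.
  split.
  + exists [:: a]; split => //; split => //; split.
    * by move=> x; rewrite inE => /eqP ->.
    * move=> v [v0 zv]; exists a; split; first by rewrite inE.
      case: (eqVneq v a) => [->|va]; first by right.
      by left; split => //; rewrite mulrC; apply/Ha.
  + move=> X [_ Xd] m; rewrite ltnS leqn0 => /eqP -> [s [_ [/size0nil -> hs]]].
    have [x [Xx _]] := Xd c (conj c0 (ex_intro _ d (conj d0 cd))).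
    by move: (proj1 (hs x) Xx); rewrite in_nil.
Qed.
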